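(* Let $A$ and $B$ be rings, $f: A\to B$ a ring homomorphism and $J$ a proper ideal of $B$ such that $J\subseteq \mathrm{nil}(B)$. Then $A\bowtie^{f}J$ is a nil-Armendariz ring if and only if $A$ is a nil-Armendariz ring.
   Context: All rings are associative with identity (not necessarily commutative), ring homomorphisms are unital, and ideals are two-sided. $\mathrm{nil}(R)$ denotes the set of nilpotent elements of a ring $R$, and $\mathrm{nil}(R)[x]$ the set of polynomials all of whose coefficients lie in $\mathrm{nil}(R)$. For a ring homomorphism $f:A\to B$ and an ideal $J$ of $B$, the amalgamation is the subring $A\bowtie^{f}J=\{(a,f(a)+j)\mid a\in A,\ j\in J\}$ of $A\times B$. A ring $R$ is nil-Armendariz if whenever $p(x)=\sum_{i=0}^n a_ix^i$ and $q(x)=\sum_{j=0}^m b_jx^j$ in $R[x]$ satisfy $p(x)q(x)\in\mathrm{nil}(R)[x]$, then $a_ib_j\in\mathrm{nil}(R)$ for all $i,j$. *)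

(* Defs.v *)
From HB Require Import structures.
From mathcomp Require Import all_boot all_algebra.
Set Implicit Arguments. Unset Strict Implicit. Unset Printing Implicit Defensive.
Import GRing.Theory.
Local Open Scope ring_scope.

Definition is_nil (R : nzRingType) (x : R) : Prop := exists n : nat, x ^+ n = 0.

Definition nil_Armendariz (R : nzRingType) : Prop :=
  forall p q : {poly R},
    (forall k : nat, is_nil (p * q)`_k) ->
    forall i j : nat, is_nil (p`_i * q`_j).

Record ideal2 (B : nzRingType) := Ideal2 {
  ideal2_pred :> {pred B};
  ideal2_0 : 0 \in ideal2_pred;
  ideal2_B : forall u v, u \in ideal2_pred -> v \in ideal2_pred -> u - v \in ideal2_pred;
  ideal2_Ml : forall a u, u \in ideal2_pred -> a * u \in ideal2_pred;
  ideal2_Mr : forall a u, u \in ideal2_pred -> u * a \in ideal2_pred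
}.

Section Amalgamation.
Variables (A B : nzRingType) (f : {rmorphism A -> B}) (J : ideal2 B).

(* (a, b) \in A ⋈^f J  iff  b = f a + j for some j \in J, i.e. b - f a \in J *)
Definition amalg_pred : {pred (A * B)%type} :=
  [pred x : (A * B)%type | x.2 - f x.1 \in J].

Lemma amalg_pred_subring : GRing.subring_closed amalg_pred.
Proof.
split.
- by rewrite inE /= rmorph1 subrr ideal2_0.
- move=> [a b] [c d]; rewrite !inE /= => H1 H2.
  rewrite rmorphB /=.
  have -> : b - d - (f a - f c) = (b - f a) - (d - f c).
    by rewrite !opprB !addrA [LHS]addrAC (addrAC b) [RHS]addrAC.
  exact: ideal2_B.
- move=> [a b] [c d]; rewrite !inE /= => H1 H2.
  rewrite rmorphM /=.
  have -> : b * d - f a * f c = (b - f a) * d - (- (f a * (d - f c))).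
    by rewrite opprK mulrBl mulrBr addrA subrK.
  apply: ideal2_B; first exact: ideal2_Mr.
  by have := ideal2_Ml (- f a) H2; rewrite mulNr.
Qed.

HB.instance Definition _ := GRing.isSubringClosed.Build (A * B)%type amalg_pred
  amalg_pred_subring.

Record amalgamation := Amalg { amalg_val :> (A * B)%type; _ : amalg_val \in amalg_pred }.
HB.instance Definition _ := [isSub for amalg_val].
HB.instance Definition _ := [Choice of amalgamation by <:].
HB.instance Definition _ := [SubChoice_isSubNzRing of amalgamation by <:].

End Amalgamation.

(* Main.v *)
Require Import Defs.
From HB Require Import structures.
From mathcomp Require Import all_boot all_algebra.
Local Open Scope ring_scope.
Import GRing.Theory.

Section Aux.
Variables (A B : nzRingType) (f : {rmorphism A -> B}) (J : ideal2 B).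
Variable J_nil : forall j : B, j \in J -> is_nil j.

Local Notation R := (amalgamation f J).

Definition piA (x : R) : A := (val x).1.
Definition piB (x : R) : B := (val x).2.

Lemma piAX (x : R) n : piA (x ^+ n) = piA x ^+ n.
Proof. by rewrite /piA rmorphXn /= -[LHS]/(fst _) rmorphXn. Qed.
Lemma piBX (x : R) n : piB (x ^+ n) = piB x ^+ n.
Proof. by rewrite /piB rmorphXn /= -[LHS]/(snd _) rmorphXn. Qed.

Lemma piA_zmod : zmod_morphism piA.
Proof. by move=> x y; rewrite /piA rmorphB. Qed.
HB.instance Definition _ := GRing.isZmodMorphism.Build R A piA piA_zmod.
Lemma piA_mon : monoid_morphism piA.
Proof. by split; [rewrite /piA rmorph1 | move=> x y; rewrite /piA rmorphM]. Qed.
HB.instance Definition _ := GRing.isMonoidMorphism.Build R A piA piA_mon.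

Lemma nil_piA (x : R) : is_nil x <-> is_nil (piA x).
Proof.
split.
  by move=> [n Hn]; exists n; rewrite -piAX Hn /piA.
move=> [n Hn]; set y := x ^+ n.
have Hy : piA y = 0 by rewrite piAX.
have : piB y - f (piA y) \in J by have := valP y; rewrite inE.
rewrite Hy rmorph0 subr0 => /J_nil [m Hm].
exists (n * m.+1)%N; rewrite exprM -/y; apply: val_inj.
rewrite [LHS]surjective_pairing -/(piA _) -/(piB _).
have E : piB y ^+ m.+1 = 0 by rewrite exprS Hm mulr0.
by rewrite piAX piBX Hy E expr0n.
Qed.

Lemma sA_in (a : A) : (a, f a) \in amalg_pred f J.
Proof. by rewrite inE /= subrr ideal2_0. Qed.
Definition sA (a : A) : R := Amalg (sA_in a).
Lemma sAK a : piA (sA a) = a. Proof. by []. Qed.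

Lemma sA_zmod : zmod_morphism sA.
Proof. by move=> x y; apply: val_inj; rewrite /= rmorphB. Qed.
HB.instance Definition _ := GRing.isZmodMorphism.Build A R sA sA_zmod.
Lemma sA_mon : monoid_morphism sA.
Proof.
split; first by apply: val_inj; rewrite /= rmorph1.
by move=> x y; apply: val_inj; rewrite /= rmorphM.
Qed.
HB.instance Definition _ := GRing.isMonoidMorphism.Build A R sA sA_mon.

End Aux.

Theorem theorem3p1 (A B : nzRingType) (f : {rmorphism A -> B}) (J : ideal2 B)
    (J_proper : 1 \notin J)
    (J_nil : forall j : B, j \in J -> is_nil j) :
  nil_Armendariz (amalgamation f J) <-> nil_Armendariz A.
Proof.
split.
- move=> H p q Hpq i j.
  have := H (map_poly (@sA _ _ f J) p) (map_poly (@sA _ _ f J) q).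
  move=> H'.
  have : is_nil ((map_poly (@sA _ _ f J) p)`_i * (map_poly (@sA _ _ f J) q)`_j).
    apply: H' => k; apply/(@nil_piA _ _ f J J_nil _).
    by rewrite -rmorphM coef_map sAK.
  by move/(@nil_piA _ _ f J J_nil _); rewrite !coef_map -rmorphM sAK.
- move=> H p q Hpq i j.
  apply/(@nil_piA _ _ f J J_nil _); rewrite rmorphM.
  rewrite -!(coef_map (@piA _ _ f J)).
  apply: H => k; rewrite -rmorphM coef_map; apply/(@nil_piA _ _ f J J_nil _); exact: Hpq.
Qed.
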